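(* If a discrete Hecke pair $(G,H)$ has property (RD), then it is relatively unimodular, i.e. $L(g)=R(g)$ for all $g\in G$.
   Context: A discrete Hecke pair is a group $G$ with a subgroup $H$ such that $L(x):=[H:H\cap xHx^{-1}]<\infty$ for all $x\in G$; set $R(x):=L(x^{-1})$. The relative modular function is $\Delta_{(G,H)}(g)=L(g)/R(g)$, and $(G,H)$ is relatively unimodular if $\Delta_{(G,H)}\equiv1$. The Hecke algebra $\mathcal H(G,H)$ consists of finitely supported right $H$-invariant functions on $H\backslash G$ with product $f*g(Hx)=\sum_{Hy\in H\backslash G}f(Hxy^{-1})g(Hy)$, and $\lambda(f)\xi=f*\xi$ on $\ell^2(H\backslash G)$. A length function on $(G,H)$ is $l:G\to[0,\infty)$ with $l(e)=0$, $l(g)=l(g^{-1})$, $l(gh)\le l(g)+l(h)$ and $l|_H=0$. $(G,H)$ has property (RD) if there exist such $l$ and $s,c>0$ with $\|\lambda(f)\|\le c\big(\sum_{Hx\in H\backslash G}|f(Hx)|^2(1+l(x))^{2s}\big)^{1/2}$ for all $f\in\mathcal H(G,H)$. *)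

(* Defs.v *)
From HB Require Import structures.
From Stdlib Require Import ClassicalEpsilon.
From mathcomp Require Import all_boot all_order all_algebra.
From mathcomp Require Import monoid.
From mathcomp Require Import all_classical all_reals.
From mathcomp Require Import topology normedtype sequences esum exp.
From mathcomp Require Import complex.

Set Implicit Arguments.
Unset Strict Implicit.
Unset Printing Implicit Defensive.

Import Order.TTheory GRing.Theory Num.Theory.
Local Open Scope classical_set_scope.
Local Open Scope ring_scope.

Section Hecke.
Variable (G : groupType).
Implicit Types (H K : set G) (x y : G).

Definition is_subgroup H : Prop :=
  [/\ H 1%g, (forall x y, H x -> H y -> H (x * y)%g) & (forall x, H x -> H (x^-1)%g)].

Definition conj_int H x : set G := [set h | H h /\ H (x^-1 * h * x)%g].

(* index_is H K n : K ⊆ H and [H : K] = n, i.e. there are exactly n left cosets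
   hK (h ∈ H) of K in H, witnessed by a list of n pairwise inequivalent
   representatives covering H. *)
Definition index_is H K (n : nat) : Prop :=
  exists s : seq G, [/\ size s = n,
    (forall i, (i < n)%N -> H (nth 1%g s i)),
    (forall i j, (i < n)%N -> (j < n)%N ->
        K ((nth 1%g s i)^-1 * nth 1%g s j)%g -> i = j) &
    (forall h, H h -> exists2 i, (i < n)%N & K ((nth 1%g s i)^-1 * h)%g)].

Definition L_is H x (n : nat) : Prop := index_is H (conj_int H x) n.
Definition R_is H x (n : nat) : Prop := L_is H (x^-1)%g n.

Definition hecke_pair H : Prop :=
  is_subgroup H /\ forall x, exists n, L_is H x n.

Definition rel_unimodular H : Prop :=
  forall g n m, L_is H g n -> R_is H g m -> n = m.

(* a chosen representative of the right coset Hx, and the set of chosen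
   representatives, which indexes H\G bijectively *)
Definition coset_rep H x : G := epsilon (inhabits 1%g) (fun y => H (y * x^-1)%g).
Definition reps H : set G := [set y | exists x, y = coset_rep H x].

Variable R : realType.
Local Notation C := (R[i]).

Definition cabs2 (z : C) : R := (complex.Re z) ^+ 2 + (complex.Im z) ^+ 2.

(* functions on H\G : left H-invariant functions on G *)
Definition left_inv H (f : G -> C) : Prop := forall h x, H h -> f (h * x)%g = f x.

(* elements of the Hecke algebra: finitely supported functions on H\G
   which are right H-invariant *)
Definition hecke_elt H (f : G -> C) : Prop :=
  [/\ left_inv H f, (forall h x, H h -> f (x * h)%g = f x) &
      finite_set [set y | reps H y /\ f y != 0]].

Definition l2norm2 H (xi : G -> C) : \bar R :=
  (\esum_(y in reps H) ((cabs2 (xi y))%:E))%E.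

Definition in_l2 H (xi : G -> C) : Prop :=
  left_inv H xi /\ (l2norm2 H xi < +oo)%E.

(* convolution (f * xi)(Hx) = sum_{Hy in H\G} f(H x y^{-1}) xi(Hy);
   for a Hecke pair and f in the Hecke algebra this sum has finite support *)
Definition conv H (f xi : G -> C) : G -> C :=
  fun x => \sum_(y \in reps H) (f (x * y^-1)%g * xi y).

Definition lambda_norm_le H (f : G -> C) (K : R) : Prop :=
  forall xi, in_l2 H xi ->
    (l2norm2 H (conv H f xi) <= (K ^+ 2)%:E * l2norm2 H xi)%E.

Definition length_fn H (l : G -> R) : Prop :=
  [/\ forall x, 0 <= l x, l 1%g = 0, (forall x, l x = l (x^-1)%g),
      (forall x y, l (x * y)%g <= l x + l y) & (forall h, H h -> l h = 0)].

Definition weighted_norm2 H (l : G -> R) (s : R) (f : G -> C) : R :=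
  \sum_(x \in reps H) (cabs2 (f x) * (1 + l x) `^ (2 * s)).

Definition property_RD H : Prop :=
  exists l : G -> R, length_fn H l /\
  exists s c : R, [/\ 0 < s, 0 < c &
    forall f, hecke_elt H f ->
      lambda_norm_le H f (c * Num.sqrt (weighted_norm2 H l s f))].

End Hecke.

(* Main.v *)
Require Import Defs.
From HB Require Import structures.
From Stdlib Require Import ClassicalEpsilon.
From mathcomp Require Import all_boot all_order all_algebra monoid.
From mathcomp Require Import all_classical all_reals.
From mathcomp Require Import topology normedtype sequences esum exp.
From mathcomp Require Import complex.
From mathcomp Require Import zify ring lra.

Set Implicit Arguments.
Unset Strict Implicit.
Unset Printing Implicit Defensive.


Lemma bern b j : 0 < b -> (b + j) * b ^ j <= b * (b + 1) ^ j.
Proof.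
move=> b0; elim: j => [|j IH]; first by rewrite !expn0 addn0.
rewrite !expnS.
have h1 : (b + j.+1) * (b * b ^ j) <= (b + 1) * ((b + j) * b ^ j).
  have : (b + j.+1) * b <= (b + 1) * (b + j) by nia.
  by move=> h; rewrite mulnA (mulnA (b+1)); apply: leq_mul.
by apply: (leq_trans h1); rewrite [X in _ <= X]mulnCA leq_mul2l IH orbT.
Qed.

Lemma lexp m n e : m <= n -> m ^ e <= n ^ e.
Proof. by move=> h; elim: e => [|e IH]; rewrite ?expn0 // !expnS leq_mul. Qed.

Lemma exp_beats a b M k : b < a -> 0 < b -> exists n, M * b ^ n * (n + 1) ^ k < a ^ n.
Proof.
move=> ba b0.
pose Q := b * k.+1 + 1; pose J := M * Q ^ k + 1; pose t := k.+1 * J.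
exists (b * t).
have hb2 : 2 * b ^ b <= (b + 1) ^ b.
  by have := bern b b0; rewrite addnn -mul2n -mulnA mulnCA leq_pmul2l.
have h1 : 2 ^ t * b ^ (b * t) <= a ^ (b * t).
  apply: (leq_trans (n := (b + 1) ^ (b * t))); last by apply: lexp; rewrite addn1.
  by rewrite (expnM b b t) (expnM (b+1) b t) -expnMn; apply: lexp.
apply: (leq_trans _ h1); rewrite mulnAC ltn_pmul2r ?expn_gt0 ?b0 //.
have J0 : 0 < J by rewrite /J addn1.
have h2 : b * t + 1 <= Q * J.
  rewrite /t /Q mulnA mulnDl mul1n leq_add2l; exact: J0.
apply: (leq_ltn_trans (n := M * (Q * J) ^ k)); first by apply: leq_mul => //; apply: lexp.
have h3 : J ^ k.+1 < 2 ^ t.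
  by rewrite /t mulnC expnM ltn_exp2r //; apply: ltn_expl.
apply: leq_ltn_trans h3; rewrite expnMn expnS mulnA leq_mul2r; apply/orP; right.
by rewrite /J addn1.
Qed.

Local Open Scope classical_set_scope.


Section Idx.
Variable (G : groupType).
Implicit Types (A K U Y Z : set G) (x y : G).
Local Open Scope group_scope.

Lemma sg1 A : is_subgroup A -> A 1. Proof. by case. Qed.
Lemma sgM A x y : is_subgroup A -> A x -> A y -> A (x * y). Proof. by case=> _ h _; apply: h. Qed.
Lemma sgV A x : is_subgroup A -> A x -> A (x^-1). Proof. by case=> _ _ h; apply: h. Qed.
Lemma sgVE A x : is_subgroup A -> A (x^-1) = A x.
Proof. move=> sA; rewrite propeqE; split=> h; last exact: sgV.
by rewrite -(invgK x); apply: sgV. Qed.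

Lemma sgI A B : is_subgroup A -> is_subgroup B -> is_subgroup (A `&` B).
Proof.
move=> sA sB; split; first by split; apply: sg1.
- by move=> x y [? ?] [? ?]; split; apply: sgM.
- by move=> x [? ?]; split; apply: sgV.
Qed.

Definition conjset x A : set G := [set y | A (x^-1 * y * x)].

Lemma sgJ A x : is_subgroup A -> is_subgroup (conjset x A).
Proof.
move=> sA; split; rewrite /conjset /=.
- by rewrite mulg1 mulVg; apply: sg1.
- move=> y z Hy Hz; have := sgM sA Hy Hz.
  by rewrite -!mulgA (mulgA x) mulgV mul1g.
- move=> y Hy; have := sgV sA Hy.
  by rewrite !invgM invgK !mulgA.
Qed.

Lemma conjsetM x y A : conjset x (conjset y A) = conjset (x * y) A.
Proof.
rewrite /conjset /=; apply: funext => z /=.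
by rewrite invgM !mulgA.
Qed.

Lemma conjsetI x A B : conjset x (A `&` B) = conjset x A `&` conjset x B.
Proof. by []. Qed.

Lemma conjset1 A : conjset 1 A = A.
Proof. by rewrite /conjset; apply: funext => z /=; rewrite invg1 mul1g mulg1. Qed.

Definition dfam A K (n : nat) (f : nat -> G) : Prop :=
  (forall i, (i < n)%N -> A (f i)) /\
  (forall i j, (i < n)%N -> (j < n)%N -> K ((f i)^-1 * f j) -> i = j).

Definition idxn A K (n : nat) : Prop :=
  exists f, dfam A K n f /\ forall h, A h -> exists2 i, (i < n)%N & K ((f i)^-1 * h).

Lemma index_idxn A K n : index_is A K n -> idxn A K n.
Proof.
case=> s [_ h1 h2 h3]; exists (nth 1 s); split=> //.
Qed.

Lemma idxn_index A K n : idxn A K n -> index_is A K n.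
Proof.
case=> f [[h1 h2] h3]; exists (mkseq f n); split.
- by rewrite size_mkseq.
- by move=> i hi; rewrite nth_mkseq //; apply: h1.
- by move=> i j hi hj; rewrite !nth_mkseq //; apply: h2.
- by move=> h /h3 [i hi hK]; exists i => //; rewrite nth_mkseq.
Qed.

Lemma count_le A K n f m g : is_subgroup K -> dfam A K n f ->
  (forall h, A h -> exists2 i, (i < m)%N & K ((g i)^-1 * h)) -> (n <= m)%N.
Proof.
move=> sK [fA fd] gc.
have ch : forall i : 'I_n, {j : 'I_m | K ((g j)^-1 * f i)}.
  move=> i; apply: cid; have [j jm hj] := gc _ (fA _ (ltn_ord i)).
  by exists (Ordinal jm).
pose phi := fun i => sval (ch i).
have inj : injective phi.
  move=> i1 i2 e; apply: val_inj; apply: fd; rewrite ?ltn_ord //.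
  have k1 := svalP (ch i1); have k2 := svalP (ch i2).
  rewrite /phi in e; rewrite e in k1.
  have := sgM sK (sgV sK k1) k2.
  by rewrite invgM invgK mulgA mulgK.
by have := leq_card _ inj; rewrite !card_ord.
Qed.

Lemma idxn_uniq A K n m : is_subgroup K -> idxn A K n -> idxn A K m -> n = m.
Proof.
move=> sK [f [df cf]] [g [dg cg]]; apply/eqP; rewrite eqn_leq.
by rewrite (count_le sK df cg) (count_le sK dg cf).
Qed.

Lemma idxn_gt0 A K n : A 1 -> idxn A K n -> (0 < n)%N.
Proof. by move=> A1 [f [_ cf]]; have [i hi _] := cf _ A1; apply: leq_ltn_trans hi. Qed.

Lemma idxn_exists A K M : is_subgroup K ->
  (forall n f, dfam A K n f -> (n <= M)%N) -> exists n, idxn A K n.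
Proof.
move=> sK bnd.
pose P := fun n => `[< exists f, dfam A K n f >].
have P0 : exists n, P n.
  by exists 0%N; apply/asboolP; exists (fun=> 1); split.
have Pb : forall n, P n -> (n <= M)%N by move=> n /asboolP [f /bnd].
case: (ex_maxnP P0 Pb) => n /asboolP [f df] nmax.
exists n, f; split=> // h Ah; apply: contrapT => nc.
pose f' := fun i => if i == n then h else f i.
have : (n.+1 <= n)%N; last by rewrite ltnn.
apply: nmax; apply/asboolP; exists f'; split.
- move=> i hi; rewrite /f'; case: (eqVneq i n) => [_|ni]; first exact: Ah.
  by apply: df.1; rewrite ltn_neqAle ni -ltnS.
- move=> i j hi hj; rewrite /f'.
  case: (eqVneq i n) => [ein|ni]; case: (eqVneq j n) => [ejn|nj] hK.
  + by rewrite ein ejn.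
  + exfalso; apply: nc; exists j; first by rewrite ltn_neqAle nj -ltnS.
    by rewrite -(invgK (_ * h)) sgVE // invgM invgK.
  + exfalso; apply: nc; exists i; first by rewrite ltn_neqAle ni -ltnS.
    exact: hK.
  + by apply: df.2 => //; rewrite ltn_neqAle ?ni ?nj -ltnS.
Qed.

Lemma idxn_mono U Y Z m : is_subgroup U -> is_subgroup Y -> is_subgroup Z ->
  U `<=` Y -> idxn Y (Y `&` Z) m -> exists n, idxn U (U `&` Z) n.
Proof.
move=> sU sY sZ UY [g [dg cg]]; apply: (@idxn_exists _ _ m); first exact: sgI.
move=> n f [fU fd]; apply: (count_le (A:=Y) (K:=Y `&` Z) (f:=f) (g:=g)) _ _ cg; first exact: sgI.
split; first by move=> i hi; apply: UY; apply: fU.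
move=> i j hi hj [hY hZ]; apply: fd => //; split => //.
by apply: (sgM sU); [apply: (sgV sU); apply: fU | apply: fU].
Qed.

Lemma idxn_tower A E D a b : is_subgroup A -> is_subgroup E -> is_subgroup D ->
  E `<=` A -> D `<=` E -> idxn A E a -> idxn E D b -> idxn A D (a * b)%N.
Proof.
move=> sA sE sD EA DE [f [[fA fd] fc]] [g [[gE gd] gc]].
have b0 : (0 < b)%N by apply: (@idxn_gt0 E D b (sg1 sE)); exists g; split => //; split.
exists (fun k => f (k %/ b)%N * g (k %% b)%N); split; first split.
- move=> k hk; apply: sgM => //; first by apply: fA; rewrite ltn_divLR.
  by apply: EA; apply: gE; rewrite ltn_mod.
- move=> k k' hk hk' hK.
  have hq : (k %/ b)%N = (k' %/ b)%N.
    apply: fd; rewrite ?ltn_divLR //.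
    have e1 := DE _ hK.
    have g1 : E (g (k %% b)%N) by apply: gE; rewrite ltn_mod.
    have g2 : E (g (k' %% b)%N) by apply: gE; rewrite ltn_mod.
    have := sgM sE (sgM sE g1 e1) (sgV sE g2).
    by rewrite invgM !mulgA mulgV mul1g mulgK.
  have hr : (k %% b)%N = (k' %% b)%N.
    apply: gd; rewrite ?ltn_mod //.
    by move: hK; rewrite hq invgM !mulgA mulgVK.
  by rewrite (divn_eq k b) (divn_eq k' b) hq hr.
- move=> h Ah; have [i hi hE] := fc _ Ah; have [j hj hD] := gc _ hE.
  exists (i * b + j)%N.
    by rewrite -ltn_divLR // divnMDl // divn_small // addn0.
  by rewrite divnMDl // divn_small // addn0 modnMDl modn_small // invgM -mulgA.
Qed.

Ltac gs := rewrite ?invgM ?invgK -?mulgA ?(mulKg, mulVKg, mulgV, mulVg, mulg1, mul1g).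

Lemma idxn_conj A K n x : idxn A K n -> idxn (conjset x A) (conjset x K) n.
Proof.
case=> f [[fA fd] fc]; exists (fun i => x * f i * x^-1); split; first split.
- by move=> i hi; rewrite /conjset /=; gs; apply: fA.
- move=> i j hi hj; rewrite /conjset /= => hK; apply: fd => //.
  by move: hK; gs.
- move=> h; rewrite /conjset /= => hA; have [i hi hK] := fc _ hA.
  by exists i => //; gs; move: hK; gs.
Qed.

Lemma idxn_eqset A A' K K' n : A = A' -> K = K' -> idxn A K n -> idxn A' K' n.
Proof. by move=> -> ->. Qed.

Lemma cocycle A B C p1 q1 p2 q2 p3 q3 :
  is_subgroup A -> is_subgroup B -> is_subgroup C ->
  idxn A (A `&` B) p1 -> idxn B (A `&` B) q1 ->
  idxn B (B `&` C) p2 -> idxn C (B `&` C) q2 ->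
  idxn C (C `&` A) p3 -> idxn A (C `&` A) q3 ->
  (p1 * p2 * p3 = q1 * q2 * q3)%N.
Proof.
move=> sA sB sC h1 k1 h2 k2 h3 k3.
pose D := A `&` B `&` C.
have sAB := sgI sA sB; have sBC := sgI sB sC; have sCA := sgI sC sA.
have sD : is_subgroup D by apply: sgI.
have [r1 i1] := idxn_mono sAB sB sC (fun x => @proj2 _ _) h2.
have [r2 i2'] := idxn_mono sBC sC sA (fun x => @proj2 _ _) h3.
have [r3 i3'] := idxn_mono sCA sA sB (fun x => @proj2 _ _) h1.
have eD2 : B `&` C `&` A = D.
  by rewrite /D; apply: funext => z /=; rewrite propeqE; tauto.
have eD3 : C `&` A `&` B = D.
  by rewrite /D; apply: funext => z /=; rewrite propeqE; tauto.
rewrite eD2 in i2'; rewrite eD3 in i3'.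
have DAB : D `<=` A `&` B by move=> z [].
have DBC : D `<=` B `&` C by move=> z [[? ?] ?].
have DCA : D `<=` C `&` A by move=> z [[? ?] ?].
have t1 := idxn_tower sA sAB sD (fun x => @proj1 _ _) DAB h1 i1.
have t1' := idxn_tower sB sAB sD (fun x => @proj2 _ _) DAB k1 i1.
have t2 := idxn_tower sB sBC sD (fun x => @proj1 _ _) DBC h2 i2'.
have t2' := idxn_tower sC sBC sD (fun x => @proj2 _ _) DBC k2 i2'.
have t3 := idxn_tower sC sCA sD (fun x => @proj1 _ _) DCA h3 i3'.
have t3' := idxn_tower sA sCA sD (fun x => @proj2 _ _) DCA k3 i3'.
have eA := idxn_uniq sD t1 t3'.
have eB := idxn_uniq sD t1' t2.
have eC := idxn_uniq sD t2' t3.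
have r1p : (0 < r1)%N by apply: (idxn_gt0 (sg1 sAB) i1).
have r2p : (0 < r2)%N by apply: (idxn_gt0 (sg1 sBC) i2').
have r3p : (0 < r3)%N by apply: (idxn_gt0 (sg1 sCA) i3').
have : ((p1 * p2 * p3) * (r1 * r2 * r3) = (q1 * q2 * q3) * (r1 * r2 * r3))%N.
  have -> : ((p1 * p2 * p3) * (r1 * r2 * r3) = (p1 * r1) * (p2 * r2) * (p3 * r3))%N by ring.
  have -> : ((q1 * q2 * q3) * (r1 * r2 * r3) = (q1 * r1) * (q2 * r2) * (q3 * r3))%N by ring.
  by rewrite eA eB eC; ring.
move/eqP; rewrite eqn_pmul2r; first by move/eqP.
by rewrite !muln_gt0 r1p r2p r3p.
Qed.



Lemma L_idxn H x m : L_is H x m -> idxn H (H `&` conjset x H) m.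
Proof. by move/index_idxn. Qed.

Lemma R_idxn H x m : is_subgroup H -> R_is H x m -> idxn (conjset x H) (conjset x H `&` H) m.
Proof.
move=> sH /index_idxn hm; have h := idxn_conj x hm.
have e : conjset x (conj_int H x^-1) = conjset x H `&` H.
  by apply: funext => z; rewrite /conjset /conj_int /setI /=; gs.
by rewrite -e.
Qed.

Section Pow.
Variables (H : set G) (g : G) (a b : nat).
Hypothesis hH : hecke_pair H.
Hypothesis ha : L_is H g a.
Hypothesis hb : R_is H g b.

Let Hn n := conjset (g ^+ n) H.

Lemma delta_pow n u v : L_is H (g ^+ n) u -> R_is H (g ^+ n) v ->
  (u * b ^ n = v * a ^ n)%N.
Proof.
have sH := hH.1.
have sHn : forall n, is_subgroup (Hn n) by move=> k; apply: sgJ.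
elim: n u v => [|n IH] u' v' hu' hv'.
  move: (L_idxn hu') (R_idxn sH hv'); rewrite expg0 conjset1 => i1 i2.
  by rewrite !expn0 !muln1; apply: (idxn_uniq (sgI sH sH) i1 i2).
have [u hu] := hH.2 (g ^+ n).
have [v hv] := hH.2 ((g ^+ n)^-1).
have hv0 : R_is H (g ^+ n) v by [].
have IHn := IH _ _ hu hv0.
have h1 := L_idxn hu.
have k1 : idxn (Hn n) (H `&` Hn n) v by rewrite setIC; apply: R_idxn.
have h2 : idxn (Hn n) (Hn n `&` Hn n.+1) a.
  have := idxn_conj (g ^+ n) (L_idxn ha).
  by rewrite conjsetI conjsetM -expgSr.
have k2 : idxn (Hn n.+1) (Hn n `&` Hn n.+1) b.
  have := idxn_conj (g ^+ n) (R_idxn sH hb).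
  by rewrite conjsetI conjsetM -expgSr setIC.
have h3 : idxn (Hn n.+1) (Hn n.+1 `&` H) v' by apply: R_idxn.
have k3 : idxn H (Hn n.+1 `&` H) u' by rewrite setIC; apply: L_idxn.
have coc := cocycle sH (sHn n) (sHn n.+1) h1 k1 h2 k2 h3 k3.
have v0 : (0 < v)%N by apply: (idxn_gt0 (sg1 (sHn n)) k1).
apply/eqP; rewrite -(eqn_pmul2l v0); apply/eqP.
transitivity ((v * b * u') * b ^ n)%N; first by rewrite expnS; ring.
rewrite -coc; transitivity (a * v' * (u * b ^ n))%N; first by ring.
by rewrite IHn expnS; ring.
Qed.

End Pow.
End Idx.


Section Reps.
Variable (G : groupType).
Variable (H : set G).
Hypothesis sH : is_subgroup H.
Local Open Scope group_scope.

Ltac gs := rewrite ?invgM ?invgK -?mulgA ?(mulKg, mulVKg, mulgV, mulVg, mulg1, mul1g).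

Definition dcoset x : set G := [set z | exists a b, [/\ H a, H b & z = a * x * b]].

Lemma cr_in x : H (coset_rep H x * x^-1).
Proof. rewrite /coset_rep; apply: (epsilon_spec (inhabits 1) (fun y => H (y * x^-1))).
by exists x; rewrite mulgV; apply: sg1. Qed.

Lemma cr_eq x y : H (x * y^-1) -> coset_rep H x = coset_rep H y.
Proof.
move=> hxy; rewrite /coset_rep; congr (epsilon _ _); apply: funext => z.
rewrite propeqE; split => hz.
- have := sgM sH hz hxy; by gs.
- have := sgM sH hz (sgV sH hxy); by gs.
Qed.

Lemma dcosetHl x h z : H h -> dcoset x (h * z) = dcoset x z.
Proof.
move=> hh; rewrite propeqE; split => -[a [b [ha hb e]]].
- exists (h^-1 * a), b; split => //; first by apply: sgM => //; apply: sgV.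
  by rewrite -(mulKg h z) e !mulgA.
- exists (h * a), b; split => //; first by apply: sgM.
  by rewrite e !mulgA.
Qed.

Lemma dcosetHr x h z : H h -> dcoset x (z * h) = dcoset x z.
Proof.
move=> hh; rewrite propeqE; split => -[a [b [ha hb e]]].
- exists a, (b * h^-1); split => //; first by apply: sgM => //; apply: sgV.
  by rewrite -(mulgK h z) e !mulgA.
- exists a, (b * h); split => //; first by apply: sgM.
  by rewrite e !mulgA.
Qed.

Lemma dcosetV x z : dcoset x z -> dcoset x^-1 z^-1.
Proof.
case=> a [b [ha hb ->]]; exists b^-1, a^-1; split; try exact: sgV.
by gs.
Qed.

Lemma dcoset_self x : dcoset x x.
Proof. by exists 1, 1; split; try apply: sg1; gs. Qed.

Lemma rcoset_fam x m : R_is H x m ->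
  exists y : nat -> G, [/\ forall i, (i < m)%N -> dcoset x (y i),
    forall z, dcoset x z -> exists2 i, (i < m)%N & H (z * (y i)^-1) &
    forall i j, (i < m)%N -> (j < m)%N -> H (y i * (y j)^-1) -> i = j].
Proof.
move=> /index_idxn [f [[fH fd] fc]].
exists (fun i => x * (f i)^-1); split.
- move=> i hi; exists 1, (f i)^-1; split; [exact: sg1| exact: (sgV sH (fH _ hi))|by gs].
- move=> z [a [b [ha hb ->]]].
  have [i hi hK] := fc (b^-1) (sgV sH hb).
  exists i => //; gs.
  case: hK => hK1 hK2.
  apply: (sgM sH ha); move: hK2; rewrite invgK; gs.
  move=> hh; have := sgV sH hh; by gs.
- move=> i j hi hj hK; apply: fd => //; split.
  + exact: (sgM sH (sgV sH (fH _ hi)) (fH _ hj)).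
  + by rewrite invgK; move: hK; gs.
Qed.

Definition repl (y : nat -> G) m : seq G := mkseq (fun i => coset_rep H (y i)) m.

Section RepList.
Variables (x : G) (y : nat -> G) (m : nat).
Hypothesis yS : forall i, (i < m)%N -> dcoset x (y i).
Hypothesis yc : forall z, dcoset x z -> exists2 i, (i < m)%N & H (z * (y i)^-1).
Hypothesis yd : forall i j, (i < m)%N -> (j < m)%N -> H (y i * (y j)^-1) -> i = j.

Lemma repl_uniq : uniq (repl y m).
Proof.
rewrite /repl map_inj_in_uniq ?iota_uniq // => i j; rewrite !mem_iota !add0n => hi hj e.
apply: yd => //; have h1 := cr_in (y i); have h2 := cr_in (y j).
rewrite e in h1; have := sgM sH (sgV sH h1) h2; by gs.
Qed.

Lemma repl_size : size (repl y m) = m.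
Proof. by rewrite size_mkseq. Qed.

Lemma repl_in r : r \in repl y m -> reps H r /\ dcoset x r.
Proof.
case/mapP => i; rewrite mem_iota add0n => hi ->; split; first by exists (y i).
have e : coset_rep H (y i) = (coset_rep H (y i) * (y i)^-1) * y i by gs.
by rewrite e dcosetHl; [apply: yS | apply: cr_in].
Qed.

Lemma repl_cover r : reps H r -> dcoset x r -> r \in repl y m.
Proof.
case=> w -> hw.
have e : coset_rep H w = (coset_rep H w * w^-1) * w by gs.
rewrite e dcosetHl in hw; last exact: cr_in.
have [i hi hH] := yc hw.
apply/mapP; exists i; first by rewrite mem_iota.
exact: cr_eq.
Qed.

End RepList.
End Reps.

Import Order.TTheory GRing.Theory Num.Theory.
Local Open Scope ring_scope.


Section Sums.
Variable (G : groupType) (H : set G).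
Hypothesis sH : is_subgroup H.
Variables (x : G) (y : nat -> G) (m : nat).
Hypothesis yS : forall i, (i < m)%N -> dcoset H x (y i).
Hypothesis yc : forall z, dcoset H x z -> exists2 i, (i < m)%N & H (z * (y i)^-1)%g.
Hypothesis yd : forall i j, (i < m)%N -> (j < m)%N -> H (y i * (y j)^-1)%g -> i = j.

Lemma fsum_reps (V : nmodType) (phi : G -> V) :
  (forall z, reps H z -> ~ dcoset H x z -> phi z = 0) ->
  \sum_(z \in reps H) phi z = \sum_(r <- repl H y m) phi r.
Proof.
move=> hz; rewrite (fsbig_seq _ _ (repl_uniq sH yd)); symmetry.
apply: fsbig_widen.
- by move=> r /= hr; have [] := repl_in sH yS hr.
- move=> z [hr hn] /=; apply: hz => // hd; apply: hn => /=.
  exact: (repl_cover sH yc).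
Qed.

Lemma esum_reps (R : realType) (psi : G -> \bar R) :
  (forall z, 0 <= psi z)%E ->
  (forall z, reps H z -> ~ dcoset H x z -> psi z = 0%E) ->
  (\esum_(z in reps H) psi z = \sum_(r <- repl H y m) psi r)%E.
Proof.
move=> h0 hz.
have e1 : (\esum_(z in reps H) psi z = \esum_(z in reps H) if z \in [set` repl H y m] then psi z else 0)%E.
  apply: eq_esum => z hr; case: ifPn => // /negP; rewrite inE => hn.
  apply: hz => // hd; apply: hn => /=; exact: (repl_cover sH yc).
rewrite e1 -esum_mkcondr.
have e2 : reps H `&` [set` repl H y m] = [set` repl H y m].
  apply: funext => z /=; rewrite propeqE; split; first by case.
  by move=> hz'; split => //; have [] := repl_in sH yS hz'.
rewrite e2 esum_fset; [|exact: finite_seq|by move=> i _; apply: h0].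
by rewrite -fsbig_seq // (repl_uniq sH yd).
Qed.

End Sums.

Section Cx.
Variable R : realType.
Lemma natC (n : nat) : (n%:R : R[i]) = (n%:R)%:C%C.
Proof. by rewrite rmorph_nat. Qed.
Lemma cabs2_nat (n : nat) : cabs2 (n%:R : R[i]) = n%:R ^+ 2.
Proof. by rewrite natC /cabs2 /= expr0n /= addr0. Qed.
Lemma cabs2_0 : cabs2 (0 : R[i]) = 0.
Proof. by rewrite /cabs2 /= expr0n /= addr0. Qed.
Lemma cabs2_1 : cabs2 (1 : R[i]) = 1.
Proof. by rewrite /cabs2 /= expr0n /= addr0 expr1n. Qed.
End Cx.

Lemma sum_ones (V : pzSemiRingType) (T : eqType) (s : seq T) (F : T -> V) :
  (forall r, r \in s -> F r = 1) -> \sum_(r <- s) F r = (size s)%:R.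
Proof.
elim: s => [|a s IH] h; first by rewrite big_nil.
rewrite big_cons h ?mem_head //.
by rewrite IH ?mulrS // => r hr; apply: h; rewrite in_cons hr orbT.
Qed.

Lemma sum_constK (V : pzSemiRingType) (T : Type) (s : seq T) (K : V) :
  \sum_(r <- s) K = (size s)%:R * K.
Proof.
elim: s => [|a s IH]; first by rewrite big_nil mul0r.
by rewrite big_cons IH /= mulrS mulrDl mul1r.
Qed.

Section Main.
Variables (R : realType) (G : groupType) (H : set G) (l : G -> R) (s c : R).
Hypothesis sH : is_subgroup H.
Hypothesis hl : length_fn H l.
Hypothesis s0 : 0 < s.
Hypothesis c0 : 0 < c.
Hypothesis hrd : forall f, hecke_elt H f -> lambda_norm_le H f (c * Num.sqrt (weighted_norm2 H l s f)).

Definition ind (S : set G) : G -> R[i] := fun z => if `[< S z >] then 1 else 0.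

Lemma l_ge0 z : 0 <= l z. Proof. by case: hl. Qed.

Lemma l_dcoset x z : dcoset H x z -> l z <= l x.
Proof.
case: hl => _ _ _ lM lH [a [b [ha hb ->]]].
apply: (le_trans (lM _ _)); rewrite (lH _ hb) addr0.
by apply: (le_trans (lM _ _)); rewrite (lH _ ha) add0r.
Qed.

Lemma ind_in (S : set G) z : S z -> ind S z = 1.
Proof. by move=> hz; rewrite /ind; case: asboolP. Qed.
Lemma ind_out (S : set G) z : ~ S z -> ind S z = 0.
Proof. by move=> hz; rewrite /ind; case: asboolP. Qed.

Lemma main_ineq x m m' : R_is H x m -> L_is H x m' ->
  (m'%:R : R) <= c ^+ 2 * m%:R * (1 + l x) `^ (2 * s).
Proof.
move=> hm hm'.
have [y [yS yc yd]] := rcoset_fam sH hm.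
have hm'' : R_is H x^-1 m' by rewrite /R_is invgK.
have [y' [yS' yc' yd']] := rcoset_fam sH hm''.
pose f := ind (dcoset H x); pose xi := ind (dcoset H x^-1).
have fE z : f z = if `[< dcoset H x z >] then 1 else 0 by [].
have hf : hecke_elt H f.
  split.
  - by move=> h z hh; rewrite !fE (@dcosetHl G H sH x h z hh).
  - by move=> h z hh; rewrite !fE (@dcosetHr G H sH x h z hh).
  - apply: (sub_finite_set _ (finite_seq (repl H y m))) => z [hr hz] /=.
    apply: (repl_cover sH yc hr); apply: contrapT => hn; move: hz.
    by rewrite /f ind_out // eqxx.
have hxi_l : left_inv H xi by move=> h z hh; rewrite /xi /ind (@dcosetHl G H sH x^-1 h z hh).
have nxi : l2norm2 H xi = (m'%:R)%:E.
  rewrite /l2norm2 (esum_reps sH yS' yc' yd').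
  - rewrite sumEFin; congr (_%:E).
    transitivity ((size (repl H y' m'))%:R : R); last by rewrite /repl size_mkseq.
    apply: sum_ones => r hr; have [_ hd] := repl_in sH yS' hr.
    by rewrite /xi ind_in // cabs2_1.
  - by move=> z; rewrite lee_fin /cabs2 addr_ge0 // sqr_ge0.
  - by move=> z _ hn; rewrite /xi ind_out // cabs2_0.
pose r0 := coset_rep H 1.
have hr0 : H r0 by have := cr_in sH 1; rewrite invg1 mulg1.
have convE : conv H f xi r0 = m'%:R.
  rewrite /conv (fsum_reps sH yS' yc' yd').
  - transitivity ((size (repl H y' m'))%:R : R[i]); last by rewrite /repl size_mkseq.
    apply: sum_ones => r hr; have [_ hd] := repl_in sH yS' hr.
    rewrite /xi (ind_in hd) mulr1 /f ind_in //.
    rewrite (@dcosetHl G H sH x r0 _ hr0).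
    by have := dcosetV sH hd; rewrite invgK.
  - by move=> z _ hn; rewrite /xi ind_out // mulr0.
have hlow : (((m'%:R : R) ^+ 2)%:E <= l2norm2 H (conv H f xi))%E.
  rewrite /l2norm2; apply: esum_ge; exists [set r0].
    by split; [exact: finite_set1 | move=> z -> ; exists 1%g].
  by rewrite fsbig_set1 convE cabs2_nat.
pose W := weighted_norm2 H l s f.
have WE : W = \sum_(r <- repl H y m) cabs2 (f r) * (1 + l r) `^ (2 * s).
  rewrite /W /weighted_norm2 (fsum_reps sH yS yc yd) //.
  by move=> z _ hn; rewrite /f ind_out // cabs2_0 mul0r.
have W0 : 0 <= W.
  rewrite WE; apply: sumr_ge0 => r _; apply: mulr_ge0; last exact: powR_ge0.
  by rewrite /cabs2 addr_ge0 // sqr_ge0.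
have Wle : W <= m%:R * (1 + l x) `^ (2 * s).
  rewrite WE big_seq.
  apply: (le_trans (y := \sum_(r <- repl H y m | r \in repl H y m) (1 + l x) `^ (2 * s))).
    apply: ler_sum => r hr; have [_ hd] := repl_in sH yS hr.
    rewrite /f ind_in // cabs2_1 mul1r.
    apply: ge0_ler_powR.
    - by rewrite mulr_ge0 // ltW.
    - by rewrite nnegrE addr_ge0 ?l_ge0.
    - by rewrite nnegrE addr_ge0 ?l_ge0.
    - by rewrite lerD2l; apply: l_dcoset.
  by rewrite -big_seq sum_constK /repl size_mkseq.
have hin : in_l2 H xi by split => //; rewrite nxi ltry.
have hb := hrd hf hin.
rewrite nxi -EFinM in hb.
have := le_trans hlow hb; rewrite lee_fin => hineq.
rewrite exprMn sqr_sqrtr // in hineq.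
have P0 : 0 <= (1 + l x) `^ (2 * s) by apply: powR_ge0.
case: (posnP m') => [-> | m'0].
  by rewrite mulr_ge0 // mulr_ge0 // sqr_ge0.
have M0 : 0 < (m'%:R : R) by rewrite ltr0n.
have h1 : (m'%:R : R) <= c ^+ 2 * W.
  by move: hineq; rewrite expr2 ler_pM2r.
apply: (le_trans h1); rewrite -mulrA; apply: ler_wpM2l => //.
exact: sqr_ge0.
Qed.


End Main.


Lemma l_pow (R : realType) (G : groupType) (H : set G) (l : G -> R) g n :
  length_fn H l -> l (g ^+ n)%g <= n%:R * l g.
Proof.
case=> _ l1 _ lM _; elim: n => [|n IH]; first by rewrite expg0 l1 mul0r.
rewrite expgS mulrS mulrDl mul1r; apply: (le_trans (lM _ _)).
by rewrite lerD2l.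
Qed.

Lemma le_delta (R : realType) (G : groupType) (H : set G) (l : G -> R) (s c : R) g a b :
  hecke_pair H -> length_fn H l -> 0 < s -> 0 < c ->
  (forall f, hecke_elt H f -> lambda_norm_le H f (c * Num.sqrt (weighted_norm2 H l s f))) ->
  L_is H g a -> R_is H g b -> (a <= b)%N.
Proof.
move=> hH hl s0 c0 hrd ha hb.
have sH := hH.1.
case: (leqP a b) => // ba; exfalso.
have b0 : (0 < b)%N by apply: (idxn_gt0 (sg1 sH) (L_idxn hb)).
have L0 : 0 <= l g by apply: (l_ge0 hl).
pose k := Num.Def.archi_bound (2 * s).
have hk : 2 * s <= k%:R by apply/ltW/archi_boundP; rewrite mulr_ge0 // ltW.
pose K0 := c ^+ 2 * (1 + l g) ^+ k.
have K00 : 0 <= K0 by rewrite mulr_ge0 ?sqr_ge0 // exprn_ge0 // addr_ge0.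
pose M := Num.Def.archi_bound K0.
have hM : K0 <= M%:R by apply/ltW/archi_boundP.
have main : forall n, (a ^ n <= M * b ^ n * (n + 1) ^ k)%N.
  move=> n.
  have [u hu] := hH.2 (g ^+ n)%g.
  have [v hv] := hH.2 ((g ^+ n)^-1)%g.
  have hv' : R_is H (g ^+ n)%g v by [].
  have dp := delta_pow hH ha hb hu hv'.
  have mi := main_ineq sH hl s0 hrd hv' hu.
  have v0 : (0 < v)%N by apply: (idxn_gt0 (sg1 sH) (L_idxn hv)).
  have hP : (1 + l (g ^+ n)%g) `^ (2 * s) <= ((n + 1) ^ k)%:R * (1 + l g) ^+ k.
    have b1 : 1 <= 1 + l (g ^+ n)%g by rewrite lerDl (l_ge0 hl).
    apply: (le_trans (ler_powR b1 hk)); rewrite powR_mulrn ?(le_trans ler01) //.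
    rewrite natrX -exprMn.
    have e1 : 1 + l (g ^+ n)%g <= (n + 1)%:R * (1 + l g).
      apply: (le_trans (y := 1 + n%:R * l g)).
        by rewrite lerD2l; apply: (l_pow g n hl).
      have n0 : 0 <= (n%:R : R) by []. rewrite natrD; nra.
    apply: lerXn2r => //; rewrite nnegrE ?addr_ge0 ?(l_ge0 hl) ?mulr_ge0 //.
    by rewrite addr_ge0.
    set P := (1 + l (g ^+ n)%g) `^ (2 * s) in mi hP.
  set B : R := (b ^ n)%:R; set Nk : R := ((n + 1) ^ k)%:R.
  have B0 : 0 <= B by []. have Nk0 : 0 <= Nk by [].
  have h : (v%:R * (a ^ n)%:R : R) <= v%:R * (M%:R * B * Nk).
    rewrite -natrM -dp natrM.
    apply: (le_trans (y := c ^+ 2 * v%:R * P * B)); first by apply: ler_wpM2r.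
    apply: (le_trans (y := v%:R * (K0 * Nk * B))).
      have E1 : c ^+ 2 * v%:R * P * B = (c ^+ 2 * v%:R * B) * P by ring.
      have E2 : v%:R * (K0 * Nk * B) = (c ^+ 2 * v%:R * B) * (Nk * (1 + l g) ^+ k).
        by rewrite /K0; ring.
      rewrite E1 E2; apply: ler_wpM2l => //.
      by rewrite mulr_ge0 // mulr_ge0 // sqr_ge0.
    apply: ler_wpM2l => //; rewrite [M%:R * B * Nk]mulrAC -[K0 * Nk * B]mulrA -mulrA.
    by apply: ler_wpM2r => //; rewrite mulr_ge0.
  rewrite ler_pM2l ?ltr0n // /B /Nk -!natrM ler_nat in h.
  exact: h.
have [N hn] := exp_beats M k ba b0.
by have := main N; rewrite leqNgt hn.
Qed.

Theorem corollary3p13 (G : groupType) (H : set G) (R : realType) :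
  hecke_pair H -> property_RD R H -> rel_unimodular H.
Proof.
move=> hH [l [hl [s [c [s0 c0 hrd]]]]] g n m hn hm.
apply/eqP; rewrite eqn_leq (le_delta hH hl s0 c0 hrd hn hm) /=.
apply: (le_delta (g := (g^-1)%g) hH hl s0 c0 hrd) => //.
by rewrite /R_is invgK.
Qed.
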